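(* Let $n\ge 0$ and put $\mathbb{C}[\epsilon]=\mathbb{C}[z]/(z^{n+1})$. Let $K=\mathbb{C}(s,x,t_0,u_{i,j}:0\le j\le i)$ with the derivation $\partial$ described in the context, and write $u_i=u_{i,i}$. Then in $K[\epsilon]=K\otimes\mathbb{C}[\epsilon]$: (a) $t_0-x+\epsilon=\Big(\sum_{k=0}^{n}\frac{1}{k!}\partial^k\big(\frac{t_0-x}{s-u_0}\big)\epsilon^k\Big)\Big(s-\sum_{k=0}^{n}u_k\epsilon^k\Big)$; (b) for every $0\le m\le n$, $\frac{1}{m!}\partial^m\big(\log(s-u_0)\big)=[\epsilon^m]\log\big(s-\sum_{k=0}^n u_k\epsilon^k\big)$.
   Context: $K$ is the field of rational functions over $\mathbb{C}$ in the independent variables $s,x,t_0$ and $u_{i,j}$ for integers $0\le j\le i$. The derivation $\partial:K\to K$ is the unique $\mathbb{C}$-linear derivation with $\partial s=\partial x=0$, $\partial t_0=1$ and $\partial u_{i,j}=(j+1)u_{i+1,j+1}$; one writes $u_i:=u_{i,i}$ (so $\partial u_i=(i+1)u_{i+1}$). In (b), for $m\ge1$, $\partial^m\log(s-u_0)$ means $\partial^{m-1}\big(\frac{-u_1}{s-u_0}\big)$ (the formal derivative of $\log(s-u_0)$ is $-\partial u_0/(s-u_0)$), and for $m\ge 1$, $[\epsilon^m]\log(s-\sum_k u_k\epsilon^k)$ denotes the coefficient of $\epsilon^m$ in the (finite, since $\epsilon$ is nilpotent) expansion of $\log\big(1-\sum_{k=1}^n\frac{u_k}{s-u_0}\epsilon^k\big)=-\sum_{r\ge1}\frac1r\big(\sum_{k=1}^n\frac{u_k}{s-u_0}\epsilon^k\big)^r$;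 for $m=0$ both sides are $\log(s-u_0)$. *)

(* Defs.v *)
From HB Require Import structures.
From mathcomp Require Import all_boot all_order all_algebra.
Set Implicit Arguments.
Unset Strict Implicit.
Unset Printing Implicit Defensive.
Import Order.TTheory GRing.Theory Num.Theory.
Local Open Scope ring_scope.

Definition is_derivation (K : fieldType) (D : K -> K) : Prop :=
  (forall a b, D (a + b) = D a + D b) /\
  (forall a b, D (a * b) = D a * b + a * D b).

(* K[eps] = K[z]/(z^(n+1)) is represented by {poly K} modulo 'X^(n+1);
   two polynomials are equal in K[eps] iff their remainders mod 'X^(n+1)
   agree. *)
Definition eqeps (K : fieldType) (n : nat) (p q : {poly K}) : Prop :=
  modp p ('X^(n.+1)) = modp q ('X^(n.+1)).

(* The polynomial  - sum_{r=1}^{n} (1/r) P^r  with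
   P = sum_{k=1}^{n} u_k/(s-u_0) eps^k : it represents
   log(1 - sum_{k=1}^n u_k/(s-u_0) eps^k) in K[eps] (terms with r > n
   vanish since P has no constant term and eps^(n+1) = 0). *)
Definition log1m_eps (K : fieldType) (n : nat) (s : K) (u : nat -> K)
  : {poly K} :=
  let P := \sum_(1 <= k < n.+1) (u k / (s - u 0%N)) *: 'X^k in
  - \sum_(1 <= r < n.+1) (r%:R)^-1 *: P ^+ r.

(* Main.v *)
Require Import Defs.
From HB Require Import structures.
From mathcomp Require Import all_boot all_order all_algebra.
From mathcomp Require Import ring zify.
Import Order.TTheory GRing.Theory Num.Theory.
Local Open Scope ring_scope.

Section S.
Variables (K : fieldType) (charK0 : [pchar K] =i pred0).
Variables (D : K -> K) (hD : is_derivation D).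

Lemma natK_neq0 k : (k.+1%:R : K) != 0.
Proof. by move/pcharf0P: charK0 => ->. Qed.

Lemma factK_neq0 k : ((k`!)%:R : K) != 0.
Proof. by move/pcharf0P: charK0 => ->; rewrite -lt0n fact_gt0. Qed.

Lemma DD a b : D (a + b) = D a + D b. Proof. by case: hD. Qed.
Lemma DM a b : D (a * b) = D a * b + a * D b. Proof. by case: hD. Qed.
Lemma D0 : D 0 = 0.
Proof. by apply: (addrI (D 0)); rewrite -DD !addr0. Qed.
Lemma DN a : D (- a) = - D a.
Proof. by apply/eqP; rewrite -addr_eq0 -DD addNr D0. Qed.
Lemma DB a b : D (a - b) = D a - D b. Proof. by rewrite DD DN. Qed.
Lemma D1 : D 1 = 0.
Proof. have h := DM 1 1; rewrite !mulr1 mul1r in h.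
by apply: (addrI (D 1)); rewrite addr0 -h. Qed.

Lemma iterD0 k : iter k D 0 = 0.
Proof. by elim: k => //= k ->; rewrite D0. Qed.
Lemma iterDD k a b : iter k D (a + b) = iter k D a + iter k D b.
Proof. by elim: k => //= k ->; rewrite DD. Qed.
Lemma iterDN k a : iter k D (- a) = - iter k D a.
Proof. by elim: k => //= k ->; rewrite DN. Qed.
Lemma iterDB k a b : iter k D (a - b) = iter k D a - iter k D b.
Proof. by rewrite iterDD iterDN. Qed.

Definition T N a : {poly K} := \poly_(k < N) ((k`!%:R)^-1 * iter k D a).
Definition eqlow N (p q : {poly K}) := forall j, (j < N)%N -> p`_j = q`_j.

Lemma eqlow_refl N p : eqlow N p p. Proof. by []. Qed.
Lemma eqlow_sym N p q : eqlow N p q -> eqlow N q p.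
Proof. by move=> h j hj; rewrite h. Qed.
Lemma eqlow_trans N p q r : eqlow N p q -> eqlow N q r -> eqlow N p r.
Proof. by move=> h1 h2 j hj; rewrite h1 ?h2. Qed.
Lemma eqlow_add N p p' q q' : eqlow N p p' -> eqlow N q q' -> eqlow N (p + q) (p' + q').
Proof. by move=> h1 h2 j hj; rewrite !coefD h1 ?h2. Qed.
Lemma eqlow_scale N c p p' : eqlow N p p' -> eqlow N (c *: p) (c *: p').
Proof. by move=> h1 j hj; rewrite !coefZ h1. Qed.
Lemma eqlow_mul N p p' q q' : eqlow N p p' -> eqlow N q q' -> eqlow N (p * q) (p' * q').
Proof.
move=> h1 h2 j hj; rewrite !coefM; apply: eq_bigr => i _.
rewrite h1 ?h2 //; first by apply: leq_ltn_trans hj; apply: leq_subr.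
by apply: leq_ltn_trans hj; rewrite -ltnS.
Qed.

Lemma eqlow_deriv N p q : eqlow N p^`() q^`() -> p`_0 = q`_0 -> eqlow N.+1 p q.
Proof.
move=> h h0 [|j] hj; first exact: h0.
have := h j hj; rewrite !coef_deriv => e.
by apply: (mulIf (natK_neq0 j)); rewrite !mulr_natr.
Qed.

Lemma T_low m N a : (m <= N)%N -> eqlow m (T N a) (T m a).
Proof.
by move=> hm j hj; rewrite !coef_poly hj (leq_trans hj hm).
Qed.

Lemma T_add N a b : T N (a + b) = T N a + T N b.
Proof.
apply/polyP => i; rewrite coefD !coef_poly; case: (i < N)%N.
  by rewrite iterDD mulrDr.
by rewrite addr0.
Qed.

Lemma deriv_T N a : (T N.+1 a)^`() = T N (D a).
Proof.
apply/polyP => i; rewrite coef_deriv !coef_poly ltnS; case: ifP => _; last by rewrite mul0rn.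
rewrite -iterSr /= -[_ *+ _.+1]mulr_natr mulrAC; congr (_ * _).
rewrite factS natrM invfM mulrAC mulVf ?mul1r //; exact: natK_neq0.
Qed.

Lemma T_mul N a b : eqlow N (T N (a * b)) (T N a * T N b).
Proof.
elim: N a b => [|N IH] a b; first by [].
apply: eqlow_deriv; last by rewrite coef0M !coef_poly /= invr1 !mul1r.
rewrite deriv_T DM T_add derivM.
apply: eqlow_add.
  apply: eqlow_trans (IH _ _) _; rewrite -deriv_T.
  by apply: eqlow_mul => //; apply: eqlow_sym; apply: T_low.
apply: eqlow_trans (IH _ _) _; rewrite -deriv_T.
by apply: eqlow_mul => //; apply: eqlow_sym; apply: T_low.
Qed.


Variables (s x t0 : K) (u : nat -> K).
Hypotheses (hs : D s = 0) (hx : D x = 0) (ht0 : D t0 = 1)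
  (hu : forall i, D (u i) = i.+1%:R * u i.+1) (hsu : s - u 0%N != 0).
Variable n : nat.

Lemma D_nat k : D (k%:R) = 0.
Proof. by elim: k => [|k IH]; rewrite ?D0 // mulrS DD D1 IH addr0. Qed.

Lemma D_natM k a : D (k%:R * a) = k%:R * D a.
Proof. by rewrite DM D_nat mul0r add0r. Qed.

Lemma iter_u0 i : iter i D (u 0%N) = i`!%:R * u i.
Proof.
elim: i => [|i IH]; first by rewrite /= mul1r.
rewrite iterS IH D_natM hu factS natrM; ring.
Qed.

Lemma iter_s i : iter i.+1 D s = 0.
Proof. by rewrite iterSr /= hs iterD0. Qed.

Lemma T_g : T n.+1 (s - u 0%N) = s%:P - \sum_(k < n.+1) u k *: 'X^k.
Proof.
apply/polyP => i; rewrite -poly_def coefB coefC !coef_poly iterDB iter_u0.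
case: i => [|i]; first by rewrite /= invr1 !mul1r.
rewrite iter_s /= ltnS; case: ifP => _; last by rewrite subr0.
by rewrite sub0r mulrN mulKf ?sub0r // factK_neq0.
Qed.

Lemma T_t : eqlow n.+1 (T n.+1 (t0 - x)) ((t0 - x)%:P + 'X).
Proof.
move=> [|[|j]] hj; rewrite coef_poly hj coefD coefC coefX.
- by rewrite /= invr1 mul1r addr0.
- by rewrite /= DB ht0 hx subr0 invr1 mul1r add0r.
- by rewrite !iterSr /= DB ht0 hx subr0 D1 iterD0 mulr0 addr0.
Qed.

Lemma partA :
  eqeps n ((t0 - x)%:P + 'X)
    ((\sum_(k < n.+1) (((k`!)%:R)^-1 * iter k D ((t0 - x) / (s - u 0%N))) *: 'X^k)
     * (s%:P - \sum_(k < n.+1) u k *: 'X^k)).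
Proof.
rewrite /eqeps -!Pdiv.IdomainMonic.take_poly_modp; apply/polyP=> i; rewrite !coef_take_poly.
case: ifP => // hi.
have eT : forall a N, \sum_(k < N) ((k`!%:R)^-1 * iter k D a) *: 'X^k = T N a.
  by move=> a N; rewrite /T poly_def.
rewrite -T_g eT -(T_mul _ _ _ _ hi) mulfVK //.
by rewrite (T_t _ hi).
Qed.

Lemma powlow (p : {poly K}) k j : p`_0 = 0 -> (j < k)%N -> (p ^+ k)`_j = 0.
Proof.
move=> p0; elim: k j => [|k IH] j //= hj.
rewrite exprS coefM big1 // => -[[|i] hi] _ /=; first by rewrite p0 mul0r.
rewrite IH ?mulr0 //; lia.
Qed.

Lemma lowcancel N (q r : {poly K}) : r`_0 != 0 -> eqlow N (q * r) 0 -> eqlow N q 0.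
Proof.
move=> r0 h j hj; rewrite coef0.
suff: forall i, (i <= j)%N -> q`_i = 0 by apply.
elim: j hj => [|j IH] hj i hi.
  move: hi; rewrite leqn0 => /eqP ->.
  have := h 0%N hj; rewrite coef0M coef0 => /eqP; rewrite mulf_eq0 (negbTE r0) orbF.
  by move/eqP.
move: hi; rewrite leq_eqVlt => /orP [/eqP ->|hi]; last first.
  by apply: IH => //; apply: ltnW.
have := h j.+1 hj; rewrite coefM big_ord_recr /= subnn coef0 big1.
  by rewrite add0r => /eqP; rewrite mulf_eq0 (negbTE r0) orbF => /eqP.
move=> [i0 hi0] _ /=; rewrite IH ?mul0r //; lia.
Qed.

Let g := s - u 0%N.
Let h := - u 1%N / g.
Let P : {poly K} := \sum_(1 <= k < n.+1) (u k / g) *: 'X^k.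
Let Q := 1 - P.

Lemma P_eq : P = 'X * \poly_(k < n) (u k.+1 / g).
Proof.
rewrite /P big_add1 /= big_mkord poly_def big_distrr /=.
by apply: eq_bigr => k _; rewrite exprS scalerAr.
Qed.

Lemma P0 : P`_0 = 0.
Proof. by rewrite P_eq coefXM. Qed.

Lemma Q_eq : Q = g^-1 *: T n.+1 g.
Proof.
apply/polyP => i; rewrite /Q P_eq coefB coef1 coefXM coefZ !coef_poly /g iterDB iter_u0.
case: i => [|i]; first by rewrite /= invr1 !mul1r subr0 mulVf.
rewrite iter_s /= ltnS; case: ifP => _; last by rewrite subr0 mulr0.
rewrite sub0r sub0r mulrN mulKf ?factK_neq0 //; ring.
Qed.

Lemma step2 : eqlow n (T n h * Q) (Q^`()).
Proof.
rewrite Q_eq -scalerAr derivZ deriv_T; apply: eqlow_scale.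
refine (@eqlow_trans n _ (T n h * T n g) _ _ _).
  by apply: eqlow_mul => //; apply: T_low.
refine (eqlow_trans _ _ _ _ (eqlow_sym _ _ _ (T_mul _ _ _)) _).
have -> : h * g = D g by rewrite /h /g mulfVK // DB hs hu sub0r mul1r.
by [].
Qed.

Lemma step1 : eqlow n ((log1m_eps n s u)^`() * Q) (Q^`()).
Proof.
have hL : (log1m_eps n s u)^`() = - (P^`() * \sum_(i < n) P ^+ i).
  rewrite /log1m_eps -/g -/P derivN raddf_sum big_add1 /= big_mkord big_distrr /=.
  congr (- _); apply: eq_bigr => i _.
  rewrite derivZ deriv_exp /= -scaler_nat scalerA mulVf ?scale1r //; exact: natK_neq0.
have e : Q * \sum_(i < n) P ^+ i = 1 - P ^+ n.
  by rewrite /Q -opprB mulNr -subrX1 opprB.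
rewrite hL mulNr -mulrA [_ * Q]mulrC e /Q derivB -polyC1 derivC sub0r.
move=> j hj; rewrite coefN mulrBr mulr1 coefB coefN.
rewrite [(P^`() * _)`_j]coefM big1 ?subr0 // => [[i hi]] _ /=.
rewrite powlow ?mulr0 ?P0 //; lia.
Qed.

Lemma partB m : (1 <= m <= n)%N ->
  ((m`!)%:R)^-1 * iter m.-1 D (- u 1%N / (s - u 0%N)) = (log1m_eps n s u)`_m.
Proof.
case: m => [|k] //= hk.
have Q0 : Q`_0 != 0 by rewrite /Q coefB coef1 P0 subr0 oner_neq0.
have H : eqlow n (((log1m_eps n s u)^`() - T n h) * Q) 0.
  by move=> j hj; rewrite mulrBl coefB coef0 (step1 _ hj) (step2 _ hj) subrr.
have := lowcancel _ _ _ Q0 H k hk.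
rewrite coefB coef0 coef_deriv coef_poly hk => /eqP; rewrite subr_eq0 => /eqP E.
rewrite factS natrM invfM -mulrA -E.
set L := (log1m_eps n s u)`_k.+1.
rewrite -[L *+ _]mulr_natl mulKf //; exact: natK_neq0.
Qed.

End S.

Theorem proposition2p2 (K : fieldType) (charK0 : [pchar K] =i pred0)
  (D : K -> K) (hD : is_derivation D)
  (s x t0 : K) (u2 : nat -> nat -> K)
  (hs : D s = 0) (hx : D x = 0) (ht0 : D t0 = 1)
  (hu : forall i j : nat, (j <= i)%N -> D (u2 i j) = (j.+1)%:R * u2 i.+1 j.+1)
  (hsu : s - u2 0%N 0%N != 0)
  (n : nat) :
  let u := fun i : nat => u2 i i in
  (* (a) *)
  eqeps n ((t0 - x)%:P + 'X)
    ((\sum_(k < n.+1) (((k`!)%:R)^-1 * iter k D ((t0 - x) / (s - u 0%N))) *: 'X^k)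
     * (s%:P - \sum_(k < n.+1) u k *: 'X^k))
  /\
  (* (b), for 1 <= m <= n (the case m = 0 reads log(s-u_0) = log(s-u_0)) *)
  (forall m : nat, (1 <= m <= n)%N ->
     ((m`!)%:R)^-1 * iter m.-1 D (- u 1%N / (s - u 0%N))
     = (log1m_eps n s u)`_m).
Proof.
move=> u.
have hu' : forall i, D (u i) = i.+1%:R * u i.+1 by move=> i; exact: hu.
split.
  exact: (partA _ charK0 _ hD _ _ _ _ hs hx ht0 hu' hsu n).
move=> m hm; exact: (partB _ charK0 _ hD _ _ hs hu' hsu n m hm).
Qed.
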